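(* Let $G=\{\cdot\mid *\}$, $H=\{\cdot\mid 1\}$, and $\mathcal{U}=\mathcal{D}(G,H)$. Then $G\not\equiv_\mathcal{U}0$.
   Context: Games are finite partizan games; $*=\{0\mid0\}$, $1=\{0\mid\cdot\}$; $\{\cdot\mid X\}$ denotes the game with no Left option and sole Right option $X$. $o(G)$ is the misère outcome class (ordered $\mathscr{L}>\mathscr{N}>\mathscr{R}$, $\mathscr{L}>\mathscr{P}>\mathscr{R}$). A universe is a set of games closed under options, disjunctive sums, conjugates, and forming $\{\mathscr{G}^L\mid\mathscr{G}^R\}$ from nonempty finite subsets of it; $\mathcal{D}(G,H)$ is the smallest universe containing $G$ and $H$. $G\equiv_\mathcal{U}K$ means $o(G+X)=o(K+X)$ for all $X\in\mathcal{U}$. *)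

(* Defs.v *)
From Stdlib Require Import List Bool.
Import ListNotations.

Inductive game : Type := Game : list game -> list game -> game.

Definition left_opts (g : game) : list game := let 'Game l _ := g in l.
Definition right_opts (g : game) : list game := let 'Game _ r := g in r.

Definition zero : game := Game [] [].
Definition star : game := Game [zero] [zero].
Definition one : game := Game [zero] [].

(* Misere play: a player with no move available wins.
   wins g = (Left wins moving first, Right wins moving first). *)
Fixpoint wins (g : game) : bool * bool :=
  match g with
  | Game l r =>
      (match l with
       | [] => true
       | _ => existsb (fun x => negb (snd (wins x))) l
       end,
       match r with
       | [] => true
       | _ => existsb (fun x => negb (fst (wins x))) r
       end)
  end.

Inductive outcome : Type := OutL | OutN | OutP | OutR.

Definition o (g : game) : outcome :=
  match wins g with
  | (true, false) => OutL
  | (true, true) => OutN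
  | (false, false) => OutP
  | (false, true) => OutR
  end.

Fixpoint add (g h : game) {struct g} : game :=
  let fix addg (h : game) : game :=
    match g, h with
    | Game gl gr, Game hl hr =>
        Game (map (fun x => add x h) gl ++ map addg hl)
             (map (fun x => add x h) gr ++ map addg hr)
    end in
  addg h.

Fixpoint conjg (g : game) : game :=
  match g with Game l r => Game (map conjg r) (map conjg l) end.

Definition is_option (x g : game) : Prop :=
  In x (left_opts g) \/ In x (right_opts g).

Definition universe (U : game -> Prop) : Prop :=
  (forall g x, U g -> is_option x g -> U x) /\
  (forall g h, U g -> U h -> U (add g h)) /\
  (forall g, U g -> U (conjg g)) /\
  (forall l r, l <> [] -> r <> [] -> Forall U l -> Forall U r -> U (Game l r)).

Definition D (G H : game) : game -> Prop :=
  fun x => forall U, universe U -> U G -> U H -> U x.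

Definition equiv_mod (U : game -> Prop) (G K : game) : Prop :=
  forall X, U X -> o (add G X) = o (add K X).

(* Main.v *)
Require Import Defs.
From Stdlib Require Import List.

Theorem mainTheorem19 :
  ~ equiv_mod (D (Game nil (cons star nil)) (Game nil (cons one nil)))
      (Game nil (cons star nil)) zero.
Proof.
  intro Heq.
  assert (Hone : D (Game nil (cons star nil)) (Game nil (cons one nil)) one).
  { intros U [Hopt _] _ HH. apply (Hopt _ _ HH). right. simpl. left. reflexivity. }
  specialize (Heq one Hone). vm_compute in Heq. discriminate Heq.
Qed.
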